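(* The sets ${\sf End}$, ${\sf FP}$ and ${\sf MT}$ of twisted endofunctions, twisted parking functions and twisted packed words are symmetric suboperads of ${\sf T}\mathbb{N}$ (i.e. each contains the unit $(0)$, is closed under all partial compositions $\circ_i$, and is stable under the action of the symmetric groups). Moreover, ${\sf MT}$ is generated, as a symmetric operad, by $00$ and $01$.
   Context: Let $\mathbb{N}$ be the additive monoid of nonnegative integers. ${\sf T}\mathbb{N}=\biguplus_{n\ge1}\mathbb{N}^n$, elements of arity $n$ being words $x=(x_1,\dots,x_n)$ of length $n$ over $\mathbb{N}$ (written without separators, e.g. $01=(0,1)$), with partial compositions $x\circ_i y:=(x_1,\dots,x_{i-1},x_i+y_1,\dots,x_i+y_m,x_{i+1},\dots,x_n)$ for $x$ of arity $n$, $y$ of arity $m$, $1\le i\le n$, and right action $x\cdot\sigma:=(x_{\sigma(1)},\dots,x_{\sigma(n)})$ for $\sigma\in\mathfrak{S}_n$; this is a symmetric set-operad with unit $(0)$. A word $u$ of length $n$ is a twisted endofunction (resp. twisted parking function, twisted packed word) if the word $(u_1+1,\dots,u_n+1)$ is an endofunction (a word over $\{1,\dots,n\}$) (resp. a parking function: its nondecreasing rearrangement $v$ satisfies $v_j\le j$ for all $j$; resp. a packed word: its set of letters is $\{1,\dots,k\}$ for some $k\ge1$). ${\sf End}$, ${\sf FP}$, ${\sf MT}$ denote the sets of all twisted endofunctions, twisted parking functions and twisted packed words respectively. The symmetric suboperad generated by a set $S$ is the smallest subset containing $S$ and the unit, closed under all $\circ_i$ and the symmetric group actions. *)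

(* Defs.v *)
From mathcomp Require Import all_boot all_order all_fingroup.
Set Implicit Arguments. Unset Strict Implicit. Unset Printing Implicit Defensive.

(* Elements of T N are nonempty words over nat, represented as seq nat. *)
Definition in_TN (x : seq nat) : Prop := 0 < size x.

(* Partial composition x o_i y, with 1 <= i <= size x (1-indexed). *)
Definition pcomp (x y : seq nat) (i : nat) : seq nat :=
  take i.-1 x ++ map (addn (nth 0 x i.-1)) y ++ drop i x.

Definition pact (x : seq nat) (s : 'S_(size x)) : seq nat :=
  [seq nth 0 x (s j) | j <- enum 'I_(size x)].

Definition shift1 (u : seq nat) : seq nat := map S u.

Definition is_endofunction (w : seq nat) : Prop :=
  0 < size w /\ all (fun a => (1 <= a <= size w)) w.

Definition is_parking_function (w : seq nat) : Prop :=
  0 < size w /\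
  forall j, 1 <= j <= size w -> nth 0 (sort leq w) j.-1 <= j.

Definition is_packed_word (w : seq nat) : Prop :=
  0 < size w /\
  exists k, 1 <= k /\ forall a, (a \in w) <-> (1 <= a <= k).

Definition End_ (u : seq nat) : Prop := is_endofunction (shift1 u).
Definition FP (u : seq nat) : Prop := is_parking_function (shift1 u).
Definition MT (u : seq nat) : Prop := is_packed_word (shift1 u).

Definition is_sym_suboperad (P : seq nat -> Prop) : Prop :=
  (forall x, P x -> in_TN x) /\
  P [:: 0] /\
  (forall x y i, P x -> P y -> 1 <= i <= size x -> P (pcomp x y i)) /\
  (forall x (s : 'S_(size x)), P x -> P (pact s)).

Inductive gen_suboperad (G : seq nat -> Prop) : seq nat -> Prop :=
| gen_base x : G x -> gen_suboperad G x
| gen_unit : gen_suboperad G [:: 0]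
| gen_comp x y i : gen_suboperad G x -> gen_suboperad G y ->
    1 <= i <= size x -> gen_suboperad G (pcomp x y i)
| gen_act x (s : 'S_(size x)) : gen_suboperad G x ->
    gen_suboperad G (pact s).

(* Main.v *)
Require Import Defs.
From mathcomp Require Import all_boot all_order all_fingroup.
From mathcomp Require Import zify.
Set Implicit Arguments. Unset Strict Implicit.
Ltac nlia := try change (Equality.sort Datatypes_nat__canonical__eqtype_Equality) with nat in *; lia.

Lemma pact_tuple (x : seq nat) (s : 'S_(size x)) :
  pact s = [tuple tnth (in_tuple x) (s i) | i < size x].
Proof.
rewrite /pact /=; apply: eq_map => j.
by rewrite (tnth_nth 0).
Qed.

Lemma pact_perm x (s : 'S_(size x)) : perm_eq (pact s) x.
Proof.
apply/(@tuple_permP _ _ (pact s) (in_tuple x)).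
by exists s; rewrite pact_tuple.
Qed.

Lemma perm_pact x y : perm_eq x y -> exists s : 'S_(size y), pact s = x.
Proof.
move=> /(@tuple_permP _ _ x (in_tuple y)) [p ->]; exists p.
by rewrite pact_tuple.
Qed.
Lemma split_x x i : 1 <= i <= size x ->
  x = take i.-1 x ++ nth 0 x i.-1 :: drop i x.
Proof.
move=> /andP[i1 ix].
have e : i = i.-1.+1 by nlia.
by rewrite [in drop i x]e -drop_nth ?cat_take_drop //; nlia.
Qed.

Lemma size_pcomp x y i : 1 <= i <= size x ->
  size (Defs.pcomp x y i) = size x + size y - 1.
Proof.
move=> hi; rewrite [in RHS](split_x hi) /Defs.pcomp !size_cat /= size_map; nlia.
Qed.

Lemma count_pcomp p x y i : 1 <= i <= size x ->
  count p (Defs.pcomp x y i) + p (nth 0 x i.-1) =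
  count p x + count p (map (addn (nth 0 x i.-1)) y).
Proof.
move=> hi; rewrite [in count p x](split_x hi) /Defs.pcomp !count_cat /=; nlia.
Qed.

Lemma mem_x a x i : 1 <= i <= size x ->
  (a \in x) = [|| a \in take i.-1 x, a == nth 0 x i.-1 | a \in drop i x].
Proof. by move=> hi; rewrite {1}(split_x hi) mem_cat in_cons. Qed.

Lemma mem_pcomp a x y i :
  (a \in Defs.pcomp x y i) = [|| a \in take i.-1 x, a \in map (addn (nth 0 x i.-1)) y | a \in drop i x].
Proof. by rewrite /Defs.pcomp !mem_cat. Qed.

Lemma End_E u : End_ u <-> 0 < size u /\ all (fun a => a < size u) u.
Proof.
rewrite /End_ /is_endofunction /shift1 size_map all_map.
by split=> -[h1 h2]; split.
Qed.

Lemma End_op : is_sym_suboperad End_.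
Proof.
split; first by move=> x /End_E[].
split; first by apply/End_E.
split.
  move=> x y i /End_E[x0 /allP hx] /End_E[y0 /allP hy] hi.
  apply/End_E; rewrite size_pcomp //; split; first nlia.
  have cx : nth 0 x i.-1 < size x by apply: hx; apply: mem_nth; nlia.
  apply/allP => a; rewrite mem_pcomp => /or3P[ha|/mapP[b hb ->]|ha].
  - have := hx a (mem_take ha); nlia.
  - have := hy b hb; nlia.
  - have := hx a (mem_drop ha); nlia.
move=> x s /End_E[x0 hx]; apply/End_E.
by rewrite (perm_size (pact_perm s)) (perm_all _ (pact_perm s)).
Qed.

Lemma maxP (u : seq nat) : 0 < size u -> exists2 m, m \in u & forall a, a \in u -> a <= m.
Proof.
elim: u => [//|b u IH] _.
case: u IH => [|b' u] IH.
  by exists b; rewrite ?mem_seq1 // => a; rewrite mem_seq1 => /eqP->.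
have [m hm hmax] := IH isT.
case: (leqP b m) => hbm.
  exists m; first by rewrite in_cons hm orbT.
  by move=> a; rewrite in_cons => /orP[/eqP->//|/hmax].
exists b; first by rewrite in_cons eqxx.
move=> a; rewrite in_cons => /orP[/eqP->//|/hmax]; nlia.
Qed.

Lemma MT_E u : MT u <-> 0 < size u /\ (forall a b, a \in u -> b <= a -> b \in u).
Proof.
rewrite /MT /is_packed_word /shift1 size_map; split.
  move=> [u0 [k [k1 hk]]]; split=> // a b ha hb.
  have := (hk a.+1).1; rewrite mem_map ?ha; last exact: succn_inj.
  move=> /(_ isT) hak.
  have : b.+1 \in [seq i.+1 | i <- u] by apply/(hk b.+1).2; nlia.
  by rewrite mem_map //; exact: succn_inj.
move=> [u0 hd]; have [m hm hmax] := maxP u0.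
split=> //; exists m.+1; split=> // -[|a].
  by split=> //; move=> /mapP[].
rewrite mem_map; last exact: succn_inj.
split; first by move=> /hmax; nlia.
by move=> h; apply: (hd m) => //; nlia.
Qed.

Lemma MT_op : is_sym_suboperad MT.
Proof.
split; first by move=> x /MT_E[].
split.
  by apply/MT_E; split=> // a b; rewrite mem_seq1 => /eqP-> ; rewrite leqn0 => /eqP->; rewrite mem_seq1.
split.
  move=> x y i /MT_E[x0 hx] /MT_E[y0 hy] hi.
  set c := nth 0 x i.-1.
  have cx : c \in x by apply: mem_nth; nlia.
  have y0in : 0 \in y.
    by case: y y0 hy => [//|b y] _ hy; apply: (hy b) => //; rewrite in_cons eqxx.
  have inx : forall b, b \in x -> b \in Defs.pcomp x y i.
    move=> b; rewrite (mem_x _ hi) mem_pcomp => /or3P[->//|/eqP->|->]; last by rewrite !orbT.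
    by apply/or3P; apply: Or32; apply/mapP; exists 0; rewrite ?addn0.
  apply/MT_E; rewrite size_pcomp //; split; first nlia.
  move=> a b; rewrite mem_pcomp => /or3P[ha|/mapP[d hd ->]|ha] hb.
  - exact: inx (hx a b (mem_take ha) hb).
  - case: (leqP c b) => hcb.
      rewrite mem_pcomp; apply/or3P; apply: Or32; apply/mapP; exists (b - c).
        by apply: (hy d) => //; nlia.
      nlia.
    by apply: inx; apply: (hx c) => //; nlia.
  - exact: inx (hx a b (mem_drop ha) hb).
move=> x s /MT_E[x0 hx]; apply/MT_E.
rewrite (perm_size (pact_perm s)); split=> // a b.
by rewrite !(perm_mem (pact_perm s)); apply: hx.
Qed.

Lemma sorted_count (v : seq nat) j k : sorted leq v ->
  (k < count (fun a => a <= j) v) = (k < size v) && (nth 0 v k <= j).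
Proof.
elim: v k => [|a v IH] k //= hs.
have hv : sorted leq v by apply: path_sorted hs.
have hall : all (leq a) v := order_path_min leq_trans hs.
case: (leqP a j) => haj /=.
  case: k => [|k] /=; first by rewrite haj.
  by rewrite add1n ltnS IH.
rewrite add0n.
have -> : count (fun a0 => a0 <= j) v = 0.
  apply/eqP; rewrite -leqn0 leqNgt -has_count; apply/hasP => -[b hb hbj].
  have := allP hall b hb; nlia.
case: k => [|k] /=; first by apply/esym/negbTE/negP => h; nlia.
rewrite ltnS.
case: (ltnP k (size v)) => hk /=; last by [].
have := allP hall _ (mem_nth 0 hk); nlia.
Qed.

Lemma FP_E u : FP u <-> 0 < size u /\ forall j, minn j (size u) <= count (fun a => a < j) u.
Proof.
rewrite /FP /is_parking_function /shift1 size_map.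
set v := sort leq [seq i.+1 | i <- u].
have pv : perm_eq v [seq i.+1 | i <- u] by rewrite perm_sort.
have sv : sorted leq v by apply: sort_sorted; exact: leq_total.
have szv : size v = size u by rewrite (perm_size pv) size_map.
have cv : forall j, count (fun a => a < j) u = count (fun a => a <= j) v.
  by move=> j; rewrite (seq.permP pv) count_map.
split=> -[u0 h]; split=> // j.
  rewrite cv; case: (leqP (minn j (size u)) (count (fun a => a <= j) v)) => // hlt.
  have := sorted_count j (count (fun a => a <= j) v) sv; rewrite ltnn.
  have hj : 1 <= (count (fun a => a <= j) v).+1 <= size u by nlia.
  have := h _ hj; rewrite szv /= => hn.
  have -> : count (fun a => a <= j) v < size u by nlia.
  by rewrite /= (leq_trans hn) //; nlia.
move=> /andP[j1 jn].
have := h j; rewrite cv => hc.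
have : j.-1 < count (fun a => a <= j) v by nlia.
by rewrite sorted_count // => /andP[].
Qed.

Lemma FP_op : is_sym_suboperad FP.
Proof.
split; first by move=> x /FP_E[].
split.
  by apply/FP_E; split=> // -[|j] //=; rewrite minnE; nlia.
split.
  move=> x y i /FP_E[x0 hx] /FP_E[y0 hy] hi.
  apply/FP_E; rewrite size_pcomp //; split; first nlia.
  move=> j; set c := nth 0 x i.-1.
  have cx : c < size x.
    have : all (fun a => a < size x) x.
      by rewrite all_count eqn_leq count_size /=; have := hx (size x); rewrite minnn.
    by move/allP; apply; apply: mem_nth; nlia.
  have := count_pcomp (fun a => a < j) y hi; rewrite -/c count_map.
  have -> : count (preim (addn c) (fun a => a < j)) y = count (fun b => b < j - c) y.
    by apply: eq_count => b /=; rewrite ltn_subRL.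
  have := hx j; have := hy (j - c).
  case: (ltnP c j) => hcj /=; nlia.
move=> x s /FP_E[x0 hx]; apply/FP_E.
rewrite (perm_size (pact_perm s)); split=> // j.
by rewrite (seq.permP (pact_perm s)).
Qed.

Definition G2 := (fun x : seq nat => x = [:: 0; 0] \/ x = [:: 0; 1]).

Lemma gen_MT u : gen_suboperad G2 u -> MT u.
Proof.
have [_ [M1 [Mc Ma]]] := MT_op.
elim=> {u} //.
- move=> x [->|->]; apply/MT_E; split=> // a b; rewrite !inE.
    by move=> /orP[]/eqP-> ; rewrite leqn0 => /eqP->.
  move=> /orP[]/eqP->; first by rewrite leqn0 => /eqP->.
  by case: b => [|[|b]].
- by move=> x y i _ hx _ hy hi; apply: Mc.
- by move=> x s _ hx; apply: Ma.
Qed.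

Lemma pcomp00 v : Defs.pcomp [:: 0; 0] v 2 = 0 :: v.
Proof. by rewrite /Defs.pcomp /= cats0 (eq_map add0n) map_id. Qed.

Lemma pcomp01 v : Defs.pcomp [:: 0; 1] v 2 = 0 :: map S v.
Proof. by rewrite /Defs.pcomp /= cats0 (eq_map add1n). Qed.

Lemma sorted_gen n v : size v <= n -> sorted leq v -> MT v -> gen_suboperad G2 v.
Proof.
elim: n v => [|n IH] v hn hs /MT_E[v0 hd]; first by move: v0; case: v hn hs hd.
case: v hn v0 hs hd => [//|a v'] /= hn _ hs hd.
have hall : all (leq a) v' := order_path_min leq_trans hs.
have hs' : sorted leq v' := path_sorted hs.
have a0 : a = 0.
  have : 0 \in a :: v' by apply: (hd a) => //; rewrite inE eqxx.
  rewrite inE => /orP[/eqP//|h0]; have := allP hall _ h0; nlia.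
subst a.
case: v' hn hall hs hs' hd => [|h w] hn hall hs hs' hd; first exact: gen_unit.
have hallw : all (leq h) w := order_path_min leq_trans hs'.
have h1 : h <= 1.
  case: (leqP h 1) => // h2.
  have : 1 \in [:: 0, h & w] by apply: (hd h) => //; [rewrite !inE eqxx orbT | nlia].
  rewrite !inE => /orP[//|/orP[/eqP h3|h3]]; first nlia.
  have := allP hallw _ h3; nlia.
case: h h1 hn hall hs hs' hd hallw => [|[|//]] _ hn hall hs hs' hd hallw.
- rewrite -pcomp00; apply: gen_comp => //; first by apply: gen_base; left.
  apply: IH => //; apply/MT_E; split=> // a b ha hb.
  have : b \in [:: 0, 0 & w] by apply: (hd a) => //; rewrite inE ha orbT.
  by rewrite inE => /orP[/eqP->|//]; rewrite inE eqxx.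
- set v'' := map predn (1 :: w).
  have ev : 1 :: w = map S v''.
    rewrite /v'' -map_comp map_id_in // => b; rewrite inE => /orP[/eqP->//|hb].
    have := allP hallw _ hb; rewrite /= => hb1; nlia.
  rewrite ev -pcomp01; apply: gen_comp => //; first by apply: gen_base; right.
  apply: IH.
  + by rewrite /v'' size_map.
  + rewrite /v''; apply: homo_sorted hs' => x y; nlia.
  apply/MT_E; split; first by [].
  move=> a b ha hb.
  have : b.+1 \in 0 :: 1 :: w.
    apply: (hd a.+1); last by [].
    by rewrite inE ev mem_map ?ha ?orbT //; exact: succn_inj.
  by rewrite inE /= ev mem_map //; exact: succn_inj.
Qed.

Lemma MT_gen u : MT u -> gen_suboperad G2 u.
Proof.
move=> /MT_E[u0 hu].
set v := sort leq u.
have pv : perm_eq u v by rewrite perm_sym perm_sort.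
have [s <-] := perm_pact pv.
apply: gen_act; apply: (@sorted_gen (size v)) => //.
  by apply: sort_sorted; exact: leq_total.
apply/MT_E; rewrite -(perm_size pv); split=> // a b.
by rewrite -!(perm_mem pv); apply: hu.
Qed.

Theorem mainTheorem2 :
  is_sym_suboperad End_ /\ is_sym_suboperad FP /\ is_sym_suboperad MT /\
  (forall u : seq nat,
     gen_suboperad (fun x => x = [:: 0; 0] \/ x = [:: 0; 1]) u <-> MT u).
Proof.
split; first exact: End_op.
split; first exact: FP_op.
split; first exact: MT_op.
move=> u; split; [exact: gen_MT | exact: MT_gen].
Qed.
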